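(* Let $G$ be a finite group whose Sylow $2$-subgroups are isomorphic to $D_{2n}$ for some integer $n\ge 2$, and let $H$ be a $2$-subgroup of $G$. Then $H$ is not a perfect code of $G$ if and only if there exists a cyclic $2$-subgroup $C$ of $G$ such that $1<H<C$.
   Context: $D_{2n}$ denotes the dihedral group of order $2n$, with $D_4=C_2\times C_2$. For a group $G$ with identity $e$ and an inverse-closed subset $S\subseteq G\setminus\{e\}$, the Cayley graph $\mathrm{Cay}(G,S)$ has vertex set $G$ and edges $\{g,sg\}$ for $s\in S$, $g\in G$. A perfect code in a graph is an independent set $C$ of vertices such that every vertex outside $C$ is adjacent to exactly one vertex of $C$. A subgroup $H$ of $G$ is a perfect code of $G$ if some Cayley graph of $G$ admits $H$ as a perfect code. *)

(* Defs.v *)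
From HB Require Import structures.
From mathcomp Require Import all_boot all_order all_fingroup all_solvable.
Set Implicit Arguments.
Unset Strict Implicit.
Unset Printing Implicit Defensive.
Local Open Scope group_scope.

Definition cayley_set (gT : finGroupType) (G S : {set gT}) : bool :=
  [&& S \subset G, 1 \notin S & [forall s in S, s^-1 \in S]].

(* Adjacency in Cay(G,S): edges are {g, s g} for s in S, g in G. *)
Definition cay_adj (gT : finGroupType) (S : {set gT}) (x y : gT) : bool :=
  (y * x^-1 \in S) || (x * y^-1 \in S).

Definition perfect_code_in (gT : finGroupType) (G S C : {set gT}) : Prop :=
  [/\ C \subset G,
      (forall c1 c2, c1 \in C -> c2 \in C -> ~~ cay_adj S c1 c2) &
      (forall g, g \in G -> g \notin C -> #|[set c in C | cay_adj S g c]| = 1%N)].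

Definition is_perfect_code (gT : finGroupType) (G H : {set gT}) : Prop :=
  exists S : {set gT}, cayley_set G S /\ perfect_code_in G S H.

(* Main.v *)
Require Import Defs.
From HB Require Import structures.
From mathcomp Require Import all_boot all_order all_fingroup all_solvable.
From Stdlib Require Import Classical.
From mathcomp Require Import zify.
Set Implicit Arguments.
Unset Strict Implicit.
Unset Printing Implicit Defensive.
Local Open Scope group_scope.

Lemma no2 n : 0 < n -> (2 * n <= n)%N -> False.
Proof. lia. Qed.

Section Build.
Variables (gT : finGroupType) (H : {group gT}).

Definition dcs (c : gT) : {set gT} :=
  [set y | [exists h1 in H, [exists h2 in H, y == h1 * c * h2]]].

Lemma dcsP c y : reflect (exists h1, exists h2, [/\ h1 \in H, h2 \in H & y = h1 * c * h2])
  (y \in dcs c).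
Proof.
rewrite inE; apply: (iffP existsP).
  by move=> [h1 /andP[H1 /existsP[h2 /andP[H2 /eqP E]]]]; exists h1, h2.
move=> [h1 [h2 [H1 H2 E]]]; exists h1; rewrite H1; apply/existsP; exists h2.
by rewrite H2 E eqxx.
Qed.

Lemma dcs_refl c : c \in dcs c.
Proof. by apply/dcsP; exists 1, 1; rewrite mul1g mulg1 !group1. Qed.

Lemma dcs_sym c y : y \in dcs c -> c \in dcs y.
Proof.
move=> /dcsP[h1 [h2 [H1 H2 E]]]; apply/dcsP; exists h1^-1, h2^-1.
by rewrite !groupV E !mulgA mulVg mul1g mulgK.
Qed.

Lemma dcs_trans c y z : y \in dcs c -> z \in dcs y -> z \in dcs c.
Proof.
move=> /dcsP[h1 [h2 [H1 H2 E]]] /dcsP[k1 [k2 [K1 K2 F]]]; apply/dcsP.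
exists (k1 * h1), (h2 * k2); rewrite !groupM // F E !mulgA //.
Qed.

Lemma dcs_inv c y : y \in dcs c -> y^-1 \in dcs c^-1.
Proof.
move=> /dcsP[h1 [h2 [H1 H2 E]]]; apply/dcsP; exists h2^-1, h1^-1.
by rewrite !groupV E !invgM !mulgA.
Qed.

Lemma dcs_eq c y : y \in dcs c -> dcs y = dcs c.
Proof.
move=> yc; apply/setP => z; apply/idP/idP => zD.
  exact: dcs_trans yc zD.
exact: dcs_trans (dcs_sym yc) zD.
Qed.

Lemma dcs_lcoset c y : y \in c *: H -> y \in dcs c.
Proof.
move=> /lcosetP[h Hh ->]; apply/dcsP; exists 1, h.
by rewrite group1 Hh mul1g.
Qed.

Lemma dcs_lcosetS c a : a \in dcs c -> a *: H \subset dcs c.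
Proof. by move=> ac; apply/subsetP => y /dcs_lcoset ya; apply: dcs_trans ac ya. Qed.

Lemma lc_sym y z : z \in y *: H -> y \in z *: H.
Proof. by rewrite !mem_lcoset => h; rewrite -groupV invgM invgK. Qed.

Lemma lc_trans x y z : y \in x *: H -> z \in y *: H -> z \in x *: H.
Proof.
rewrite !mem_lcoset => h1 h2.
have -> : x^-1 * z = (x^-1 * y) * (y^-1 * z) by rewrite mulgA mulgK.
by rewrite groupM.
Qed.

Lemma key a b c : b \in dcs a^-1 -> (a \in dcs c) = (b \in dcs c^-1).
Proof.
move=> ba; apply/idP/idP => h.
  by apply: dcs_trans (dcs_inv h) ba.
have h1 := dcs_inv h; rewrite invgK in h1.
have h2 := dcs_inv (dcs_sym ba); rewrite invgK in h2.
exact: dcs_trans h1 h2.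
Qed.

Definition rclosed (X : {set gT}) := {in X & H, forall x h, x * h \in X}.
Definition balanced (X : {set gT}) := forall c, #|X :&: dcs c| = #|X :&: dcs c^-1|.
Definition loopok (x : gT) := exists2 t, t \in x *: H & t * t = 1.
Definition parity (X : {set gT}) := forall c, c^-1 \in dcs c ->
  ((2 * #|H|)%N %| #|X :&: dcs c|) \/ {in X :&: dcs c, forall x, loopok x}.
Definition good (T X : {set gT}) :=
  [/\ T \subset X, {in T, forall t, t^-1 \in T},
      {in T &, forall t1 t2, t2 \in t1 *: H -> t1 = t2}
    & {in X, forall x, exists2 t, t \in T & t \in x *: H}].

Lemma good0 : good set0 set0.
Proof. by split=> [|t|t1 t2|x]; rewrite ?sub0set ?inE. Qed.

Lemma rclosed_sub (X : {set gT}) a : rclosed X -> a \in X -> a *: H \subset X.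
Proof. by move=> rc aX; apply/subsetP => y /lcosetP[h Hh ->]; apply: rc. Qed.

Lemma remove_card (X : {set gT}) (a c : gT) : a *: H \subset X ->
  #|X :&: dcs c| = (#|(X :\: a *: H) :&: dcs c| + (a \in dcs c) * #|H|)%N.
Proof.
move=> sX; rewrite -(cardsID (a *: H) (X :&: dcs c)) addnC; congr (_ + _)%N.
  apply: eq_card => y; rewrite !(in_setI, in_setD).
  by case: (y \in X); case: (y \in dcs c); case: (y \in a *: H).
case: (boolP (a \in dcs c)) => aD.
  rewrite mul1n (setIidPr _) ?card_lcoset //.
  by rewrite subsetI sX dcs_lcosetS.
rewrite mul0n; apply/eqP; rewrite cards_eq0; apply/eqP/setP => y.
rewrite in_set0; apply/negP => /setIP[/setIP[_ yD] yaH].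
case/negP: aD; apply: dcs_trans yD _; apply: dcs_sym; exact: dcs_lcoset.
Qed.


Lemma good_ext (X T' : {set gT}) a b t :
  good T' ((X :\: a *: H) :\: b *: H) -> a *: H \subset X -> b *: H \subset X ->
  t \in a *: H -> t^-1 \in b *: H -> (t^-1 \in a *: H -> t^-1 = t) ->
  good (t |: (t^-1 |: T')) X.
Proof.
move=> [sT invT uT covT] saX sbX ta tb tab.
have T'P : forall y, y \in T' -> [/\ y \in X, y \notin a *: H & y \notin b *: H].
  by move=> y /(subsetP sT); rewrite !in_setD => /andP[-> /andP[-> ->]].
have tbt : t \in b *: H -> t = t^-1.
  move=> tbH; have := lc_trans (lc_trans ta (lc_sym tbH)) tb.
  by move/tab => ->.
have inT : forall y, (y \in t |: (t^-1 |: T')) = [|| y == t, y == t^-1 | y \in T'].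
  by move=> y; rewrite !in_setU1.
have clsA : forall y, y \in t |: (t^-1 |: T') -> y \in a *: H -> y = t.
  move=> y; rewrite inT => /or3P[/eqP -> // | /eqP -> /tab -> // | /T'P[_ /negP]].
  by [].
have clsB : forall y, y \in t |: (t^-1 |: T') -> y \in b *: H -> y = t^-1.
  move=> y; rewrite inT => /or3P[/eqP -> /tbt // | /eqP -> // | /T'P[_ _ /negP]].
  by [].
split.
- apply/subsetP => y; rewrite inT => /or3P[/eqP -> | /eqP -> | /T'P[] //].
    exact: (subsetP saX).
  exact: (subsetP sbX).
- move=> y; rewrite !inT => /or3P[/eqP -> | /eqP -> | yT].
  + by rewrite eqxx orbT.
  + by rewrite invgK eqxx.
  + by rewrite invT ?orbT.
- move=> y z yT zT zy.
  case: (boolP (y \in a *: H)) => ya.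
    by rewrite (clsA y yT ya) (clsA z zT (lc_trans ya zy)).
  case: (boolP (y \in b *: H)) => yb.
    by rewrite (clsB y yT yb) (clsB z zT (lc_trans yb zy)).
  have yT' : y \in T'.
    move: yT; rewrite inT => /or3P[/eqP E | /eqP E | //].
      by rewrite E ta in ya.
    by rewrite E tb in yb.
  have zT' : z \in T'.
    move: zT; rewrite inT => /or3P[/eqP E | /eqP E | //].
      by rewrite E in zy; case/negP: ya; exact: lc_trans ta (lc_sym zy).
    by rewrite E in zy; case/negP: yb; exact: lc_trans tb (lc_sym zy).
  exact: uT.
- move=> x xX.
  case: (boolP (x \in a *: H)) => xa.
    by exists t; [rewrite inT eqxx | exact: lc_trans (lc_sym xa) ta].
  case: (boolP (x \in b *: H)) => xb.
    by exists t^-1; [rewrite inT eqxx orbT | exact: lc_trans (lc_sym xb) tb].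
  have xX' : x \in (X :\: a *: H) :\: b *: H by rewrite !in_setD xa xb xX.
  have [t' t'T t'x] := covT x xX'.
  by exists t'; rewrite // inT t'T !orbT.
Qed.


Lemma rcD (Y : {set gT}) b : rclosed Y -> rclosed (Y :\: b *: H).
Proof.
move=> rcY y h; rewrite !in_setD => /andP[yb yY] hH; rewrite rcY // andbT.
by rewrite mem_lcoset mulgA groupMr // -mem_lcoset.
Qed.

Lemma build k : forall X : {set gT}, #|X| <= k -> rclosed X -> balanced X ->
  parity X -> exists T, good T X.
Proof.
elim: k => [|k IH] X szX rc bal par.
  case: (set_0Vmem X) => [->|[a aX]]; first by exists set0; exact: good0.
  by move: szX; rewrite leqn0 cards_eq0 => /eqP X0; rewrite X0 inE in aX.
case: (set_0Vmem X) => [->|[a aX]]; first by exists set0; exact: good0.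
have saX := rclosed_sub rc aX.
have Hpos : 0 < #|H| := cardG_gt0 H.
have aXa : a \notin X :\: a *: H by rewrite in_setD lcoset_refl.
case: (pickP [pred b | (b \in X :&: dcs a^-1) && (b \notin a *: H)]) =>
    [b /andP[/setIP[bX ba] bnaH] | none].
- case/dcsP: (ba) => h1 [h2 [H1 H2 E]].
  pose t := a * h1^-1.
  have ta : t \in a *: H by rewrite mem_lcoset mulKg groupV.
  have Et : t^-1 = b * h2^-1 by rewrite E mulgK /t invgM invgK.
  have tb : t^-1 \in b *: H by rewrite Et mem_lcoset mulKg groupV.
  have sbX := rclosed_sub rc bX.
  pose X1 := X :\: a *: H.
  have sbX1 : b *: H \subset X1.
    apply/subsetP => y yb; rewrite in_setD (subsetP sbX) // andbT; apply/negP => ya.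
    by case/negP: bnaH; exact: lc_trans ya (lc_sym yb).
  pose X' := X1 :\: b *: H.
  have [T' gT'] : exists T', good T' X'.
    apply: IH.
    + have lt : #|X'| < #|X|.
        apply: proper_card; apply/properP; split.
          exact: subset_trans (subsetDl _ _) (subsetDl _ _).
        by exists a => //; rewrite in_setD negb_and (negPf aXa) orbT.
      by rewrite -ltnS (leq_trans lt szX).
    + by apply: rcD; apply: rcD.
    + move=> c.
      have e1 := remove_card c saX; have e2 := remove_card c sbX1.
      have e3 := remove_card c^-1 saX; have e4 := remove_card c^-1 sbX1.
      have k1 := key c ba; have k2 := key c^-1 ba; rewrite invgK in k2.
      have := bal c; rewrite e1 e3 -/X1 e2 e4 -/X' k1 k2.
      by rewrite -!addnA [((b \in dcs c^-1) * _ + _)%N]addnC => /addIn.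
    + move=> c cc; have Dc : dcs c^-1 = dcs c := dcs_eq cc.
      case: (par c cc) => [dv | lp]; last first.
        right => x /setIP[xX' xD]; apply: lp; rewrite inE xD andbT.
        by move: xX'; rewrite !in_setD => /andP[_ /andP[_ ->]].
      left; have e1 := remove_card c saX; have e2 := remove_card c sbX1.
      have k2 := key c^-1 ba; rewrite invgK Dc in k2.
      rewrite e1 -/X1 e2 -/X' -k2 in dv.
      move: dv; case: (a \in dcs c); last by rewrite mul0n !addn0.
      by rewrite mul1n -addnA addnn -mul2n dvdn_addl.
  exists (t |: (t^-1 |: T')); apply: (good_ext gT' saX sbX ta tb).
  move=> tia; case/negP: bnaH; exact: lc_trans tia (lc_sym tb).
- have sub : X :&: dcs a^-1 \subset a *: H.
    apply/subsetP => y yD; move: (none y) => /=; rewrite yD /=.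
    by move/negbFE.
  have le1 : #|X :&: dcs a| <= #|H|.
    by rewrite bal; apply: leq_trans (subset_leq_card sub) _; rewrite card_lcoset.
  have aHsub : a *: H \subset X :&: dcs a by rewrite subsetI saX dcs_lcosetS // dcs_refl.
  have eqc : #|X :&: dcs a| = #|H|.
    apply/eqP; rewrite eqn_leq le1 /=.
    by apply: leq_trans (subset_leq_card aHsub); rewrite card_lcoset.
  have [b bD] : exists b, b \in X :&: dcs a^-1.
    by apply/set0Pn; rewrite -card_gt0 -bal eqc.
  have ba := subsetP sub b bD.
  have bD2 : b \in dcs a^-1 by case/setIP: bD.
  have ainv : a^-1 \in dcs a.
    by have := dcs_refl a^-1; rewrite -(dcs_eq bD2) (dcs_eq (dcs_lcoset ba)).
  have aai : a \in dcs a^-1 by have := dcs_inv ainv; rewrite invgK.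
  have [t ta tt] : loopok a.
    case: (par a ainv) => [dv | lp]; last by apply: lp; rewrite inE aX dcs_refl.
    by exfalso; rewrite eqc in dv; exact: no2 Hpos (dvdn_leq Hpos dv).
  have tinv : t^-1 = t by apply/eqP; rewrite eq_invg_mul tt.
  pose X' := X :\: a *: H.
  have EX : X' :\: a *: H = X'.
    by apply/setP => y; rewrite !in_setD; case: (y \in a *: H).
  have [T' gT'] : exists T', good T' X'.
    apply: IH.
    + have lt : #|X'| < #|X|.
        apply: proper_card; apply/properP; split; first exact: subsetDl.
        by exists a.
      by rewrite -ltnS (leq_trans lt szX).
    + by apply: rcD.
    + move=> c.
      have e1 := remove_card c saX; have e3 := remove_card c^-1 saX.
      have kk := key c aai.
      have := bal c; rewrite e1 e3 -/X' kk.
      by move/addIn.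
    + move=> c cc.
      case: (par c cc) => [dv | lp]; last first.
        right => x /setIP[xX' xD]; apply: lp; rewrite inE xD andbT.
        by move: xX'; rewrite !in_setD => /andP[_ ->].
      case: (boolP (a \in dcs c)) => ac.
        by exfalso; rewrite -(dcs_eq ac) eqc in dv; exact: no2 Hpos (dvdn_leq Hpos dv).
      left; have e1 := remove_card c saX.
      by rewrite e1 -/X' (negbTE ac) mul0n addn0 in dv.
  exists (t |: (t^-1 |: T')); apply: (good_ext (a := a) (b := a)) => //.
  - by rewrite -/X' EX.
  - by rewrite tinv.
Qed.

End Build.

Section Final.
Variable gT : finGroupType.

Lemma init (G H : {group gT}) : H \subset G -> 2.-group H ->
  (forall d, d \in G -> d \notin H -> d \in 'N(H) -> d * d \in H -> loopok H d) ->
  [/\ rclosed H (G :\: H), balanced H (G :\: H) & parity H (G :\: H)].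
Proof.
move=> sHG pH hyp; split.
- move=> x h; rewrite !in_setD => /andP[xnH xG] hH.
  by rewrite groupMr // xnH groupM // (subsetP sHG).
- move=> c.
  have E : (G :\: H) :&: dcs H c^-1 = invg @: ((G :\: H) :&: dcs H c).
    apply/setP => y; apply/idP/imsetP.
      move=> /setIP[yX yD]; exists y^-1; last by rewrite invgK.
      rewrite inE; apply/andP; split.
        by move: yX; rewrite !in_setD !groupV.
      by have := dcs_inv yD; rewrite invgK.
    move=> [z /setIP[zX zD] ->]; rewrite inE; apply/andP; split.
      by move: zX; rewrite !in_setD !groupV.
    exact: dcs_inv.
  by rewrite E card_imset //; exact: invg_inj.
- move=> c cc.
  case: (set_0Vmem ((G :\: H) :&: dcs H c)) => [-> | [d /setIP[dX dD]]].
    by left; rewrite cards0 dvdn0.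
  have Ed : dcs H d = dcs H c := dcs_eq dD.
  have dinv : d^-1 \in dcs H d.
    by rewrite Ed -(dcs_eq cc); exact: dcs_inv.
  rewrite -Ed.
  move: dX; rewrite in_setD => /andP[dnH dG].
  have sub : dcs H d \subset G :\: H.
    apply/subsetP => y /dcsP[h1 [h2 [H1 H2 ->]]]; rewrite in_setD.
    apply/andP; split; first by rewrite groupMr // groupMl.
    by rewrite !groupM // (subsetP sHG).
  rewrite (setIidPr sub).
  pose K := (H :^ d^-1)%G.
  have EK : dcs H d = (H * K) :* d.
    apply/setP => y; rewrite mem_rcoset; apply/dcsP/idP.
      move=> [h1 [h2 [H1 H2 ->]]].
      have -> : h1 * d * h2 * d^-1 = h1 * (h2 ^ d^-1) by rewrite /conjg invgK !mulgA.
      by apply: mem_mulg => //; rewrite memJ_conjg.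
    move=> /mulsgP[h k hH kK E]; exists h, (k ^ d); split => //.
      by move: kK; rewrite mem_conjg invgK.
    by rewrite /conjg !mulgA mulgK -E mulgVK.
  have cardD : #|dcs H d| = #|H * K| by rewrite EK card_rcoset.
  have cK : #|K| = #|H| by rewrite /K /= cardJg.
  have mc := mul_cardG H K; rewrite cK in mc.
  have jdv : #|H :&: K| %| #|H| by apply: cardSg; exact: subsetIl.
  have jpos : 0 < #|H :&: K| by rewrite cardG_gt0.
  pose i := #|H| %/ #|H :&: K|.
  have Hij : #|H| = (i * #|H :&: K|)%N by rewrite divnK.
  have HKi : #|H * K| = (i * #|H|)%N.
    apply/eqP; rewrite -(eqn_pmul2r jpos) -mc {1}Hij.
    by rewrite mulnAC.
  have ipn : 2.-nat i by apply: pnat_dvd pH; rewrite Hij dvdn_mulr.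
  have [e ie] := p_natP ipn.
  case: e ie => [|e] ie.
    right.
    have eHK : H :&: K = H.
      apply/eqP; rewrite eqEcard subsetIl /= {1}Hij ie expn0 mul1n leqnn //.
    have sHK : H \subset K by apply/setIidPl.
    have KH : H :^ d^-1 = H.
      apply/eqP; rewrite eq_sym eqEcard sHK /=.
      by rewrite -cK.
    have dN : d \in 'N(H) by rewrite -groupV; apply/normP.
    have ddH : d * d \in H.
      case/dcsP: dinv => h1 [h2 [H1 H2 E]].
      have e2 : d^-1 * d^-1 = h1 * (h2 ^ d^-1) by rewrite {1}E /conjg invgK !mulgA.
      have h2H : h2 ^ d^-1 \in H.
        have : h2 ^ d^-1 \in H :^ d^-1 by rewrite memJ_conjg.
        by rewrite KH.
      by rewrite -groupV invgM e2 groupM.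
    have [t td tt] := hyp d dG dnH dN ddH.
    move=> x /dcsP[h1 [h2 [H1 H2 ->]]].
    have xd : h1 * d * h2 \in d *: H.
      rewrite mem_lcoset !mulgA groupMr //.
      have : h1 ^ d \in H :^ d by rewrite memJ_conjg.
      by rewrite (normP dN) /conjg mulgA.
    by exists t => //; exact: lc_trans (lc_sym xd) td.
  left; rewrite cardD HKi; apply: dvdn_mul; last exact: dvdnn.
  by rewrite ie expnS dvdn_mulr.
Qed.

Lemma pc_of_good (G H : {group gT}) (T : {set gT}) :
  H \subset G -> good H T (G :\: H) -> is_perfect_code G H.
Proof.
move=> sHG [sT invT uT covT]; exists T; split.
  apply/and3P; split.
  - exact: subset_trans sT (subsetDl G H).
  - by apply/negP => /(subsetP sT); rewrite in_setD group1.
  - by apply/forall_inP => s sT'; exact: invT.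
split => //.
  move=> c1 c2 Hc1 Hc2; rewrite /cay_adj negb_or; apply/andP.
  by split; apply/negP => /(subsetP sT); rewrite in_setD groupM ?groupV.
move=> g gG gnH.
have gX : g \in G :\: H by rewrite in_setD gnH gG.
have [t0 t0T t0g] := covT g gX.
rewrite (_ : [set c in H | cay_adj T g c] = [set t0^-1 * g]) ?cards1 //.
apply/setP => c; rewrite !inE; apply/idP/idP.
  case/andP => cH adj.
  have sT' : g * c^-1 \in T.
    move: adj; rewrite /cay_adj => /orP[h|//].
    by have := invT _ h; rewrite invgM invgK.
  have sg : g * c^-1 \in g *: H by rewrite mem_lcoset mulKg groupV.
  have -> : t0 = g * c^-1 := uT t0 (g * c^-1) t0T sT' (lc_trans (lc_sym t0g) sg).
  by rewrite invgM invgK mulgVK.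
move/eqP => ->; apply/andP; split.
  by rewrite -groupV invgM invgK -mem_lcoset.
by apply/orP; right; rewrite invgM invgK mulVKg.
Qed.

End Final.

Section Dih.
Variable gT : finGroupType.

Lemma dih (P : {group gT}) n : 1 < n -> 2.-group P -> P \isog 'D_(n.*2) ->
  exists X : {group gT}, [/\ X \subset P, cyclic X & {in P :\: X, forall t, t * t = 1}].
Proof.
move=> n1 pP iso.
have cP : #|P| = n.*2 by rewrite (card_isog iso) card_dihedral.
have [k hk] := p_natP pP.
have k1 : 1 < k.
  case: k hk => [|[|k]] hk //; rewrite cP ?expn0 ?expn1 in hk; lia.
rewrite cP in hk; rewrite hk in iso.
have [[x y] gen _] := generators_2dihedral k1 iso.
have [[_ oX _] _ _ _ _] := dihedral2_structure k1 gen iso.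
exists <[x]>%G; split.
- by case: gen => _ xP _ _; rewrite cycle_subG.
- exact: cycle_cyclic.
- by move=> t /oX ot; rewrite -expg2 -ot expg_order.
Qed.

Lemma notpc (G H C : {group gT}) : C \subset G -> 2.-group C -> cyclic C ->
  [1 gT] \proper H -> H \proper C -> ~ is_perfect_code G H.
Proof.
move=> sCG pC cC ntH ltHC [S [cs [sHG indep cnt]]].
have [sHC [y yC ynH]] := properP ltHC.
case/cyclicP: (cC) => x defC.
have xC : x \in C by rewrite defC cycle_id.
have [g [gC gnH ggH]] : exists g, [/\ g \in C, g \notin H & g * g \in H].
  have ex : exists m, x ^+ (2 ^ m) \in H.
    have [e ce] := p_natP pC.
    by exists e; rewrite -ce expg_cardG // group1.
  case: (ex_minnP ex) => m xm minm.
  case: m xm minm => [|m] xm minm.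
    rewrite expn0 expg1 in xm.
    by case/negP: ynH; rewrite defC in yC; apply: (subsetP _ y yC); rewrite cycle_subG.
  exists (x ^+ (2 ^ m)); split.
  - exact: groupX.
  - by apply/negP => /minm; rewrite ltnn.
  - by rewrite -expgD addnn -mul2n -expnS.
have gG : g \in G := subsetP sCG g gC.
have /eqP/cards1P[c0 E] := cnt g gG gnH.
have : c0 \in [set c in H | cay_adj S g c] by rewrite E set11.
rewrite inE => /andP[cH adj].
case/and3P: cs => sSG nS1 /forall_inP invS.
have sS : g * c0^-1 \in S.
  move: adj; rewrite /cay_adj => /orP[h|//].
  by have := invS _ h; rewrite invgM invgK.
pose s := g * c0^-1.
have c0C : c0 \in C := subsetP sHC c0 cH.
have sC : s \in C by rewrite groupM ?groupV.
have snH : s \notin H.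
  by apply: contra gnH => sH; have := groupM sH cH; rewrite /s mulgVK.
have ssH : s * s \in H.
  have cm : commute g c0^-1.
    by apply: (centsP (cyclic_abelian cC)) => //; rewrite groupV.
  have -> : s * s = (g * g) * (c0^-1 * c0^-1).
    by rewrite /s -!mulgA (mulgA c0^-1) -cm !mulgA.
  by rewrite groupM // groupM // groupV.
have sG : s \in G := subsetP sCG s sC.
have /eqP/cards1P[z Ez] := cnt s sG snH.
have m1 : 1 \in [set c in H | cay_adj S s c].
  by rewrite inE group1 /cay_adj invg1 mulg1 sS orbT.
have m2 : s * s \in [set c in H | cay_adj S s c].
  by rewrite inE ssH /cay_adj mulgK; apply/orP; left.
rewrite Ez !in_set1 in m1 m2.
have ss1 : s * s = 1 by rewrite (eqP m2) (eqP m1).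
case/negP: snH.
case: (eqVneq s 1) => [->|sn1]; first exact: group1.
have os : #[s] = 2 by apply: nt_prime_order => //; rewrite expg2 ss1.
have Hn1 : H != 1%G by rewrite -proper1G.
have [pr2 dv2 _] := pgroup_pdiv (pgroupS sHC pC) Hn1.
have [h hH oh] := Cauchy pr2 dv2.
have d2 : 2 %| #[x].
  by have := order_dvdG sC; rewrite os defC => hh; exact: hh.
have EQ := cycle_sub_group d2.
have e1 : <[s]>%G \in [set K : {group gT} | K \subset <[x]> & #|K| == 2].
  have sX : s \in <[x]> by rewrite -defC.
  by rewrite inE cycle_subG sX /= -orderE os eqxx.
have e2 : <[h]>%G \in [set K : {group gT} | K \subset <[x]> & #|K| == 2].
  have hX : h \in <[x]> by rewrite -defC (subsetP sHC h hH).
  by rewrite inE cycle_subG hX /= -orderE oh eqxx.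
rewrite EQ in e1 e2; move/set1P: e1 => e1; move/set1P: e2 => e2.
have Esh : <[s]> = <[h]> :> {set gT}.
  by rewrite -[<[s]>]/(gval <[s]>%G) -[<[h]>]/(gval <[h]>%G) e1 e2.
apply: (subsetP (_ : <[h]> \subset H)); first by rewrite cycle_subG.
by rewrite -Esh cycle_id.
Qed.

End Dih.

Unset Implicit Arguments.
Set Strict Implicit.

Theorem corollary3p7 (gT : finGroupType) (G H : {group gT}) (n : nat) :
  (2 <= n)%N ->
  (forall P : {group gT}, P \in 'Syl_2(G) -> P \isog 'D_(n.*2)) ->
  H \subset G -> 2.-group H ->
  (~ is_perfect_code G H <->
   exists C : {group gT},
     [/\ C \subset G, 2.-group C, cyclic C, [1 gT] \proper H & H \proper C]).
Proof.
move=> n2 syl sHG pH; split; last first.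
  by move=> [C [sCG pC cC ntH ltHC]]; apply: notpc sCG pC cC ntH ltHC.
move=> npc; apply: NNPP => noC; apply: npc.
have hyp : forall d, d \in G -> d \notin H -> d \in 'N(H) -> d * d \in H -> loopok H d.
  move=> d dG dnH dN ddH.
  have [H1|Hn1] := eqVneq (H : {set gT}) 1.
    exists d; first exact: lcoset_refl.
    by move: ddH; rewrite H1 => /set1gP.
  pose L := (H <*> <[d]>)%G.
  have LE : L :=: H * <[d]> by rewrite /= norm_joinEr // cycle_subG.
  have pd : 2.-group <[d]>.
    rewrite /pgroup -orderE; apply: (@pnat_dvd _ (2 * #|H|)%N).
      by rewrite order_dvdn expgM expg2 expg_cardG.
    by rewrite pnatM; apply/andP; split; [exact: pnat_id | exact: pH].
  have pL : 2.-group L by rewrite LE pgroupM pH pd.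
  have sLG : L \subset G by rewrite join_subG sHG cycle_subG dG.
  have [P sylP sLP] := Sylow_superset sLG pL.
  have PS : P \in 'Syl_2(G) by rewrite inE.
  have isoP := syl P PS.
  have pP := pHall_pgroup sylP.
  have [X [sXP cX invX]] := dih n2 pP isoP.
  have dL : d \in L by apply: (subsetP (joing_subr _ _)); exact: cycle_id.
  have dP : d \in P := subsetP sLP d dL.
  have sHP : H \subset P := subset_trans (joing_subl _ _) sLP.
  case: (boolP [forall t in d *: H, t \in X]) => [/forall_inP allX | /forall_inPn [t tdH tX]]; last first.
    exists t => //; apply: invX; rewrite in_setD tX /=.
    by case/lcosetP: tdH => h hH ->; rewrite groupM // (subsetP sHP).
  exfalso; apply: noC; exists L; split => //.
  - apply: cyclicS cX; rewrite join_subG.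
    have dX : d \in X := allX d (lcoset_refl _ _).
    rewrite cycle_subG dX andbT; apply/subsetP => h hH.
    have dhX : d * h \in X by apply: allX; rewrite mem_lcoset mulKg.
    by rewrite -(mulKg d h) groupM ?groupV.
  - by rewrite proper1G.
  - apply/properP; split; first exact: joing_subl.
    by exists d.
have [pi1 pi2 pi3] := init sHG pH hyp.
have [T gT'] := build (leqnn _) pi1 pi2 pi3.
exact: pc_of_good sHG gT'.
Qed.
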